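(* For $x,y\in S^1\cap\mathbb{H}^2$, $$2\rho_{\mathbb{H}^2}(x,y)=\rho_{\mathbb{B}^2}(\operatorname{Re}x,\operatorname{Re}y),$$ where $\operatorname{Re}x,\operatorname{Re}y\in(-1,1)$ are the orthogonal projections of $x,y$ onto the real axis, regarded as points of $\mathbb{B}^2$.
   Context: $\mathbb{H}^2$ is the upper half plane, $\mathbb{B}^2$ the unit disk, $S^1$ the unit circle. $\rho_{\mathbb{H}^2}$ is given by $\cosh\rho_{\mathbb{H}^2}(x,y)=1+\frac{|x-y|^2}{2\operatorname{Im}x\operatorname{Im}y}$ and $\rho_{\mathbb{B}^2}$ by $\sinh\frac{\rho_{\mathbb{B}^2}(x,y)}{2}=\frac{|x-y|}{\sqrt{1-|x|^2}\sqrt{1-|y|^2}}$. *)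

(* Defs.v *)
From Stdlib Require Import Reals.
From Coquelicot Require Import Coquelicot.
Open Scope R_scope.

Definition acosh (u : R) : R := ln (u + sqrt (u ^ 2 - 1)).

Definition rho_H (x y : C) : R :=
  acosh (1 + (Cmod (x - y)%C) ^ 2 / (2 * Im x * Im y)).

Definition rho_B (x y : C) : R :=
  2 * arcsinh (Cmod (x - y)%C / (sqrt (1 - Cmod x ^ 2) * sqrt (1 - Cmod y ^ 2))).

(* Main.v *)
Require Import Defs.
From Stdlib Require Import Reals Lra Psatz.
From Coquelicot Require Import Coquelicot.
Open Scope R_scope.

Lemma sq_sqrt (z : R) : 0 <= z -> sqrt (z ^ 2) = z.
Proof. intro H. rewrite <- sqrt_Rsqr by exact H. f_equal. unfold Rsqr. ring. Qed.

Lemma sqrt_sq' (z : R) : 0 <= z -> sqrt z ^ 2 = z.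
Proof. intro H. simpl. rewrite Rmult_1_r. apply sqrt_sqrt. exact H. Qed.

Theorem mainTheorem5 (x y : C) :
  Cmod x = 1 -> 0 < Im x -> Cmod y = 1 -> 0 < Im y ->
  2 * rho_H x y = rho_B (RtoC (Re x)) (RtoC (Re y)).
Proof.
  destruct x as [a b], y as [c d]; unfold Cmod, Im, Re, RtoC; cbn [fst snd].
  intros Hx Hb Hy Hd.
  assert (Ex : a ^ 2 + b ^ 2 = 1).
  { rewrite <- (sqrt_sq' (a^2+b^2)) by nra. rewrite Hx; ring. }
  assert (Ey : c ^ 2 + d ^ 2 = 1).
  { rewrite <- (sqrt_sq' (c^2+d^2)) by nra. rewrite Hy; ring. }
  unfold rho_H, rho_B, acosh, arcsinh, Cmod, Cminus, Cplus, Copp, Im; cbn [fst snd].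
  rewrite (sqrt_sq' ((a + - c) ^ 2 + (b + - d) ^ 2)) by (apply Rplus_le_le_0_compat; apply pow2_ge_0).
  rewrite (sqrt_sq' (a ^ 2 + 0 ^ 2)) by nra.
  rewrite (sqrt_sq' (c ^ 2 + 0 ^ 2)) by nra.
  replace (1 - (a ^ 2 + 0 ^ 2)) with (b ^ 2) by lra.
  replace (1 - (c ^ 2 + 0 ^ 2)) with (d ^ 2) by lra.
  rewrite (sq_sqrt b) by lra. rewrite (sq_sqrt d) by lra.
  replace ((a + - c) ^ 2 + (0 + - 0) ^ 2) with (Rabs (a - c) ^ 2)
    by (rewrite pow2_abs; ring).
  rewrite sq_sqrt by apply Rabs_pos.
  set (s := Rabs (a - c) / (b * d)).
  assert (Hbd : 0 < b * d) by nra.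
  assert (Hs : 0 <= s) by (unfold s; apply Rdiv_le_0_compat; [apply Rabs_pos|lra]).
  set (u := (1 - a*c)/(b*d)).
  assert (Hu : 1 + ((a + - c) ^ 2 + (b + - d) ^ 2) / (2 * b * d) = u).
  { unfold u. replace ((a + - c) ^ 2 + (b + - d) ^ 2) with (2 * (1 - a*c - b*d)) by nra.
    field. lra. }
  rewrite Hu.
  assert (Hs2 : s ^ 2 = u ^ 2 - 1).
  { unfold s, u. unfold Rdiv. rewrite !Rpow_mult_distr, pow2_abs.
    replace ((a - c) ^ 2) with ((1 - a * c) ^ 2 - (b*d)^2) by nra.
    field. lra. }
  assert (Hu0 : 0 <= u) by (unfold u; apply Rdiv_le_0_compat; nra).
  rewrite <- Hs2. replace (s ^ 2 + 1) with (u ^ 2) by lra.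
  rewrite !sq_sqrt by lra. f_equal. f_equal. ring.
Qed.
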